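(* Let $(Y_t,X_t)_{t\ge1}$ be a hidden Markov model with finite state space $S=\{1,\dots,K\}$, $K>1$, and let $T\ge 1$. Let $C_1,C_2,C_3,C_4\ge 0$ with $C_1>0$ and $C_4>0$. For $x^T\in\mathcal X^T$ and $s^T\in S^T$ define the combined risk $$\mathcal R(s^T\mid x^T):=C_1\bar R_1(s^T|x^T)+C_2\bar R_\infty(s^T|x^T)+C_3\bar R_1(s^T)+C_4\bar R_\infty(s^T)\in[0,\infty].$$ Then for almost every realization $(x^T,y^T)$ of $(X^T,Y^T)$ (with respect to its joint law), $\min_{s^T\in S^T}\mathcal R(s^T\mid x^T)<\infty$, and every minimizer $s^T$ of $\mathcal R(\cdot\mid x^T)$ is admissible, i.e. satisfies $p(s^T|x^T)>0$.
   Context: Hidden Markov model: $Y=(Y_t)_{t\ge1}$ is a (possibly time-inhomogeneous) Markov chain on $S$ with initial distribution $\pi_j=\mathbf P(Y_1=j)$ and transition probabilities $p_{ij}$; given $Y$, the observations $X_t$ (taking values in a measurable space $(\mathcal X,\mathcal B)$) are conditionally independent, and the conditional law of $X_t$ depends on $Y$ only through $Y_t$, with density $f_s$ (w.r.t. a reference measure $\lambda$) when $Y_t=s$. Notation: $p(s^T)=\mathbf P(Y^T=s^T)$; $p(x^T,s^T)=p(s^T)\prod_{t=1}^T f_{s_t}(x_t)$; $p(x^T)=\sum_{s^T}p(x^T,s^T)$; $p(s^T|x^T)=p(x^T,s^T)/p(x^T)$; $p_t(s)=\mathbf P(Y_t=s)$; $p_t(s|x^T)=\mathbf P(Y_t=s\mid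 X^T=x^T)$. Risks (with $\log 0=-\infty$): $\bar R_1(s^T|x^T)=-\frac1T\sum_{t=1}^T\log p_t(s_t|x^T)$; $\bar R_\infty(s^T|x^T)=-\frac1T\log p(s^T|x^T)$; $\bar R_1(s^T)=-\frac1T\sum_{t=1}^T\log p_t(s_t)$; $\bar R_\infty(s^T)=-\frac1T\log p(s^T)$. *)

(* Defs.v *)
From HB Require Import structures.
From mathcomp Require Import all_boot all_order all_algebra.
From mathcomp Require Import all_classical all_reals all_analysis.
Set Implicit Arguments. Unset Strict Implicit. Unset Printing Implicit Defensive.
Import Order.TTheory GRing.Theory Num.Theory.
Local Open Scope ring_scope.
Local Open Scope classical_set_scope.

(* Time indices are 0-based: t : 'I_T stands for the paper's time t+1. *)

Definition prevo (T : nat) (t : 'I_T) : 'I_T :=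
  Ordinal (leq_ltn_trans (leq_pred t) (ltn_ord t)).

Section HMM.
Variables (R : realType) (S : finType).
(* initial distribution pi and (time-inhomogeneous) transitions:
   trans t i j = P(Y_{t+1} = j | Y_t = i)  (0-based times) *)
Variables (pi : S -> R) (trans : nat -> S -> S -> R).
Variables (d' : measure_display) (Xs : measurableType d').
Variable (f : S -> Xs -> R).

Definition pS (T : nat) (s : 'I_T -> S) : R :=
  \prod_(t < T) (if val t == 0%N then pi (s t)
                 else trans t.-1 (s (prevo t)) (s t)).

Definition pXS (T : nat) (x : 'I_T -> Xs) (s : 'I_T -> S) : R :=
  pS s * \prod_(t < T) f (s t) (x t).

Definition pX (T : nat) (x : 'I_T -> Xs) : R :=
  \sum_(s : {ffun 'I_T -> S}) pXS x s.

Definition post (T : nat) (x : 'I_T -> Xs) (s : 'I_T -> S) : R :=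
  pXS x s / pX x.

Definition marg (T : nat) (t : 'I_T) (i : S) : R :=
  \sum_(s : {ffun 'I_T -> S} | s t == i) pS s.

Definition post_marg (T : nat) (x : 'I_T -> Xs) (t : 'I_T) (i : S) : R :=
  (\sum_(s : {ffun 'I_T -> S} | s t == i) pXS x s) / pX x.

Definition nlog (p : R) : \bar R := if 0 < p then (- ln p)%:E else +oo%E.

Definition R1_post (T : nat) (x : 'I_T -> Xs) (s : 'I_T -> S) : \bar R :=
  ((T%:R)^-1)%:E * (\sum_(t < T) nlog (post_marg x t (s t)))%E.
Definition Rinf_post (T : nat) (x : 'I_T -> Xs) (s : 'I_T -> S) : \bar R :=
  ((T%:R)^-1)%:E * nlog (post x s).
Definition R1_prior (T : nat) (s : 'I_T -> S) : \bar R :=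
  ((T%:R)^-1)%:E * (\sum_(t < T) nlog (marg t (s t)))%E.
Definition Rinf_prior (T : nat) (s : 'I_T -> S) : \bar R :=
  ((T%:R)^-1)%:E * nlog (pS s).

Definition comb_risk (C1 C2 C3 C4 : R) (T : nat) (x : 'I_T -> Xs)
  (s : 'I_T -> S) : \bar R :=
  (C1%:E * R1_post x s + C2%:E * Rinf_post x s
   + C3%:E * R1_prior s + C4%:E * Rinf_prior s)%E.

Definition is_HMM (d : measure_display) (Om : measurableType d)
  (P : probability Om R) (lam : {measure set Xs -> \bar R})
  (Y : nat -> Om -> S) (X : nat -> Om -> Xs) : Prop :=
  [/\ (forall i, 0 <= pi i) /\ \sum_i pi i = 1,
      (forall t i j, 0 <= trans t i j) /\ (forall t i, \sum_j trans t i j = 1),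
      (forall i, measurable_fun setT (f i)) /\ (forall i x, 0 <= f i x)
        /\ (forall i, (\int[lam]_x (f i x)%:E = 1)%E),
      (forall t i, measurable [set w | Y t w = i]) /\
        (forall t, measurable_fun setT (X t)) &
      forall (n : nat) (s : 'I_n -> S) (B : 'I_n -> set Xs),
        (forall t, measurable (B t)) ->
        P [set w : Om | forall t : 'I_n, Y t w = s t /\ B t (X t w)]
        = ((pS s)%:E * \prod_(t < n) \int[lam]_(x in B t) (f (s t) x)%:E)%E].

End HMM.

(* Main.v *)
Require Import Defs.
From HB Require Import structures.
From mathcomp Require Import all_boot all_order all_algebra.
From mathcomp Require Import all_classical all_reals all_analysis.
Import Order.TTheory GRing.Theory Num.Theory.
Local Open Scope ring_scope.

Theorem proposition1 (R : realType) (S : finType)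
  (pi : S -> R) (trans : nat -> S -> S -> R)
  (d' : measure_display) (Xs : measurableType d') (f : S -> Xs -> R)
  (lam : {measure set Xs -> \bar R})
  (d : measure_display) (Om : measurableType d) (P : probability Om R)
  (Y : nat -> Om -> S) (X : nat -> Om -> Xs)
  (T : nat) (C1 C2 C3 C4 : R) :
  (1 < #|S|)%N ->
  is_HMM pi trans f P lam Y X ->
  (0 < T)%N ->
  0 < C1 -> 0 <= C2 -> 0 <= C3 -> 0 < C4 ->
  {ae P, forall w,
    let x := fun t : 'I_T => X t w in
    (\big[Order.min/+oo%E]_(s : {ffun 'I_T -> S})
        comb_risk pi trans f C1 C2 C3 C4 x s < +oo)%E /\
    forall s : {ffun 'I_T -> S},
      (forall s' : {ffun 'I_T -> S},
         comb_risk pi trans f C1 C2 C3 C4 x s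
         <= comb_risk pi trans f C1 C2 C3 C4 x s')%E ->
      0 < post pi trans f x s}.
Proof.
Local Open Scope classical_set_scope.
move=> _ [[pi0 _] [tr0 _] [fm [f0 _]] [Ym Xm] Hev] T0 C10 C20 C30 C40.
have pS0 : forall n (s : 'I_n -> S), 0 <= pS pi trans s.
  move=> n s; rewrite /pS; apply: prodr_ge0 => t _; case: ifP => _ //.
pose ev (s : 'I_T -> S) (B : 'I_T -> set Xs) :=
  [set w : Om | forall t : 'I_T, Y t w = s t /\ B t (X t w)].
have evm : forall s B, (forall t, measurable (B t)) -> measurable (ev s B).
  move=> s B Bm.
  have -> : ev s B = \bigcap_(t in [set: 'I_T]) ([set w | Y t w = s t] `&` (X t @^-1` B t)).
    apply/seteqP; split=> w /=.
      by move=> H t _; exact: H.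
    by move=> H t; exact: H.
  apply: fin_bigcap_measurable => // t _; apply: measurableI => //.
  by rewrite -[_ @^-1` _]setTI; apply: Xm.
pose Bz (s : 'I_T -> S) (t : 'I_T) (t' : 'I_T) : set Xs :=
  if t' == t then [set x | f (s t) x = 0] else setT.
have Bzm : forall s t t', measurable (Bz s t t').
  move=> s t t'; rewrite /Bz; case: ifP => _ //.
  rewrite -[X in measurable X]setTI; exact: fm (measurable_set1 _).
pose N (s : {ffun 'I_T -> S}) := (if pS pi trans s == 0 then ev s (fun _ => setT) else set0)
   `|` \big[setU/set0]_(t < T) ev s (Bz s t).
have Nneg : forall s, P.-negligible (N s).
  move=> s; apply: negligibleU.
    case: ifP => [/eqP H|_]; last exact: negligible_set0.
    apply/negligibleP; first by apply: evm.
    apply: (eq_trans (Hev T s (fun _ => setT) (fun _ => measurableT))).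
    by rewrite H mul0e.
  apply: (big_ind (fun A => P.-negligible A)); [exact: negligible_set0|exact: negligibleU|].
  move=> t _; apply/negligibleP; first exact: evm.
  apply: (eq_trans (Hev T s (Bz s t) (Bzm s t))).
  rewrite (bigD1 t) // //= integral0_eq ?mul0e ?mule0 //.
  by move=> x; rewrite /Bz eqxx /= => ->.
have Hgood : {ae P, forall w, (0 < pS pi trans [ffun t : 'I_T => Y t w]) /\
                 (forall t : 'I_T, 0 < f (Y t w) (X t w))}.
  have Nall : P.-negligible (\big[setU/set0]_(s : {ffun 'I_T -> S}) N s).
    by apply: (big_ind (fun A => P.-negligible A)); [exact: negligible_set0|exact: negligibleU|].
  apply: (negligibleS _ Nall) => w /= Hw.
  rewrite (bigD1 [ffun t : 'I_T => Y t w]) //=; left; rewrite /N /=.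
  case: (pselect (exists t : 'I_T, f (Y t w) (X t w) = 0)) => [[t Ht]|Hno].
    right; rewrite (bigD1 t) //=; left => t'; rewrite ffunE; split => //.
    by rewrite /Bz; case: eqP => [->|] //=; rewrite ffunE.
  left; case: ifP => [_|/negbT Hne]; first by move=> t; rewrite ffunE.
  exfalso; apply: Hw; split; first by rewrite lt_def Hne pS0.
  move=> t; rewrite lt_def f0 andbT; apply/eqP => H; apply: Hno; by exists t.
apply: filterS Hgood => w [Hy Hf].
set x := fun t : 'I_T => X t w.
set y := [ffun t : 'I_T => Y t w].
have pXS0 : forall s : 'I_T -> S, 0 <= pXS pi trans f x s.
  move=> s; rewrite /pXS; apply: mulr_ge0 => //; apply: prodr_ge0 => t _; exact: f0.
have HyX : 0 < pXS pi trans f x y.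
  rewrite /pXS; apply: mulr_gt0 => //; apply: prodr_gt0 => t _; rewrite ffunE; exact: Hf.
have pXp : 0 < pX pi trans f x.
  rewrite /pX (bigD1 y) //=; apply: (lt_le_trans HyX); rewrite lerDl.
  by apply: sumr_ge0 => s _.
have nlogE : forall p : R, 0 < p -> nlog p = (- ln p)%:E.
  by move=> p p0; rewrite /nlog p0.
have nlog_nn : forall p : R, nlog p != -oo%E.
  by move=> p; rewrite /nlog; case: ifP.
have nlog_y : forall p : R, ~ (0 < p) -> nlog p = +oo%E.
  by move=> p p0; rewrite /nlog; case: ifP.
have sum_nn : forall g : 'I_T -> \bar R, (forall t, g t != -oo%E) -> (\sum_(t < T) g t != -oo)%E.
  move=> g hg; apply: (big_ind (fun z : \bar R => z != -oo%E)) => //.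
  by move=> a b ha hb; rewrite adde_eq_ninfty negb_or ha hb.
have sum_nnP : forall (Pr : pred 'I_T) (g : 'I_T -> \bar R), (forall t, g t != -oo%E) -> (\sum_(t < T | Pr t) g t != -oo)%E.
  move=> Pr g hg; apply: (big_ind (fun z : \bar R => z != -oo%E)) => //.
  by move=> a b ha hb; rewrite adde_eq_ninfty negb_or ha hb.
have mul_nn : forall (c : R) (e : \bar R), 0 <= c -> e != -oo%E -> (c%:E * e != -oo)%E.
  move=> c e c0 he; rewrite mule_eq_ninfty (negbTE he) !andbF /= lte_fin ltNge c0 /=.
  done.
have Ti : 0 < (T%:R : R)^-1 by rewrite invr_gt0 ltr0n.
have finsum : forall g : 'I_T -> R, (forall t, 0 < g t) -> (\sum_(t < T) nlog (g t))%E \is a fin_num.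
  move=> g hg; rewrite sum_fin_num; apply/allP => z /mapP [t _ ->].
  by rewrite nlogE.
have Hpost : 0 < post pi trans f x y by rewrite /post divr_gt0.
have Hpm : forall t, 0 < post_marg pi trans f x t (y t).
  move=> t; rewrite /post_marg divr_gt0 // (bigD1 y) //=.
  apply: (lt_le_trans HyX); rewrite lerDl.
  by apply: sumr_ge0 => s _.
have Hm : forall t, 0 < marg pi trans t (y t).
  move=> t; rewrite /marg (bigD1 y) //=.
  apply: (lt_le_trans Hy); rewrite lerDl.
  by apply: sumr_ge0 => s _.
have finy : comb_risk pi trans f C1 C2 C3 C4 x y \is a fin_num.
  rewrite /comb_risk /R1_post /Rinf_post /R1_prior /Rinf_prior.
  rewrite !fin_numD; apply/andP; split; [apply/andP; split; [apply/andP; split|]|];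
    apply: fin_numM => //; apply: fin_numM => //.
  - exact: (finsum (fun t => post_marg pi trans f x t (y t))).
  - by rewrite nlogE.
  - exact: (finsum (fun t => marg pi trans t (y t))).
  - by rewrite nlogE.
have ylt : (comb_risk pi trans f C1 C2 C3 C4 x y < +oo)%E.
  by rewrite ltey; case/fin_numP: finy.
split.
  rewrite (bigD1 y) //= gt_min; by rewrite ylt.
move=> s Hs.
have slt : (comb_risk pi trans f C1 C2 C3 C4 x s != +oo)%E.
  by rewrite -ltey; apply: le_lt_trans (Hs y) ylt.
have nn1 : (C2%:E * Rinf_post pi trans f x s != -oo)%E.
  by apply: (mul_nn) => //; apply: (mul_nn); [exact: ltW|exact: nlog_nn].
have nn2 : (C3%:E * R1_prior pi trans s != -oo)%E.
  by apply: (mul_nn) => //; apply: (mul_nn); [exact: ltW|apply: (sum_nn) => t; exact: nlog_nn].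
have nn3 : (C4%:E * Rinf_prior pi trans s != -oo)%E.
  by apply: (mul_nn); [exact: ltW|apply: (mul_nn); [exact: ltW|exact: nlog_nn]].
have nn0 : (C1%:E * R1_post pi trans f x s != -oo)%E.
  by apply: (mul_nn); [exact: ltW|apply: (mul_nn); [exact: ltW|apply: (sum_nn) => t; exact: nlog_nn]].
have HA : forall t, 0 < post_marg pi trans f x t (s t).
  move=> t; apply/negPn/negP => /negP Ht; move: slt.
  rewrite /comb_risk /R1_post (bigD1 t) //= nlog_y // addye; last by apply: (sum_nnP) => t'; exact: nlog_nn.
  rewrite gt0_muley ?lte_fin // gt0_muley ?lte_fin // !addye //.
have HB : 0 < pS pi trans s.
  apply/negPn/negP => /negP Ht; move: slt.
  rewrite /comb_risk /Rinf_prior nlog_y // gt0_muley ?lte_fin // gt0_muley ?lte_fin //.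
  rewrite addey //.
  by rewrite !adde_eq_ninfty !negb_or nn0 nn1 nn2.
have HF : forall t, 0 < f (s t) (x t).
  move=> t; rewrite lt_def f0 andbT; apply/eqP => H0.
  have := HA t; rewrite /post_marg big1 ?mul0r ?ltxx // => s' /eqP Hs'.
  by rewrite /pXS (bigD1 t) //= Hs' H0 mul0r mulr0.
rewrite /post divr_gt0 // /pXS mulr_gt0 //; apply: prodr_gt0 => t _; exact: HF.
Qed.
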